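(* Fix $s\in(\tfrac12,1)$. For $k\in\mathbb{Z}$ and a positive integer $m$, let $\Lambda_m=k^2+\frac{m^2+(m+1)^2}{2}$. There exists a constant $C>0$ (independent of $k,l,m,\tau$) such that for all $k,l\in\mathbb{Z}$, all positive integers $m$ and all $\tau\in\mathbb{R}$: \[ \Big(l^2-\tfrac{m^2+(m+1)^2}{2}\Big)^2\ge C m^2; \] \[ \big|(i\tau+k^2+l^2-\Lambda_m)^{-1}\big|\le \frac{C}{\sqrt{m^2+\tau^2}}; \] \[ \big|(i\tau+k^2+l^2-\Lambda_m)^{-1}\big|\le \frac{C}{m^{1-s}|l|^{s}}\quad\text{whenever } l\neq 0; \] \[ \big|(i\tau+k^2-\Lambda_m)^{-1}\big|\le \frac{C}{\sqrt{\tau^2+m^4}}. \] *)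

(* Defs.v *)
From Stdlib Require Import Reals ZArith.
From Coquelicot Require Import Coquelicot.
Open Scope R_scope.

Definition Lambda (k : Z) (m : nat) : R :=
  IZR k ^ 2 + (INR m ^ 2 + INR (m + 1) ^ 2) / 2.

Definition itau_plus (tau a : R) : C := Cplus (Cmult Ci (RtoC tau)) (RtoC a).

(* Main.v *)
Require Import Defs.
From Stdlib Require Import Reals ZArith Lra Lia Psatz.
From Coquelicot Require Import Coquelicot.
Open Scope R_scope.

Lemma cmod_itau (tau a : R) : Cmod (itau_plus tau a) = sqrt (a ^ 2 + tau ^ 2).
Proof. unfold Cmod, itau_plus; simpl. f_equal. ring. Qed.

Lemma key_bound (tau a D K : R) : a <> 0 -> 0 < D -> 0 < K ->
  D <= K * sqrt (a ^ 2 + tau ^ 2) -> Cmod (Cinv (itau_plus tau a)) <= K / D.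
Proof.
  intros Ha HD HK H.
  assert (Hs : 0 < sqrt (a ^ 2 + tau ^ 2)).
  { apply sqrt_lt_R0. assert (0 < a ^ 2) by (apply pow2_gt_0; auto). nra. }
  rewrite Cmod_inv.
  2:{ intro E. apply (f_equal Cmod) in E. rewrite cmod_itau, Cmod_0 in E. lra. }
  rewrite cmod_itau.
  unfold Rdiv. apply Rmult_le_reg_l with (sqrt (a ^ 2 + tau ^ 2) * D).
  { nra. }
  rewrite Rinv_r_simpl_m, !Rmult_assoc.
  2: lra.
  rewrite (Rmult_comm K), <- (Rmult_assoc D), Rinv_r by lra. lra.
Qed.

Lemma rpow_pos (x y : R) : 0 < Rpower x y.
Proof. unfold Rpower. apply exp_pos. Qed.

Lemma rpow_max (x y s : R) (hs : 0 < s < 1) (M : R) : 0 < x <= M -> 0 < y <= M ->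
  Rpower x (1 - s) * Rpower y s <= M.
Proof.
  intros Hx Hy.
  assert (Rpower x (1 - s) <= Rpower M (1 - s)) by (apply Rle_Rpower_l; lra).
  assert (Rpower y s <= Rpower M s) by (apply Rle_Rpower_l; lra).
  assert (Rpower M (1 - s) * Rpower M s = M).
  { rewrite <- Rpower_plus. replace (1 - s + s) with 1 by ring. apply Rpower_1. lra. }
  pose proof (rpow_pos x (1 - s)). pose proof (rpow_pos M s).
  pose proof (rpow_pos y s).
  nra.
Qed.

Theorem lemma2p3 (s : R) (hs : 1 / 2 < s < 1) :
  exists c C : R, 0 < c /\ 0 < C /\
    forall (k l : Z) (m : nat) (tau : R), (1 <= m)%nat ->
      (IZR l ^ 2 - (INR m ^ 2 + INR (m + 1) ^ 2) / 2) ^ 2 >= c * INR m ^ 2 /\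
      Cmod (Cinv (itau_plus tau (IZR k ^ 2 + IZR l ^ 2 - Lambda k m)))
        <= C / sqrt (INR m ^ 2 + tau ^ 2) /\
      (l <> 0%Z ->
        Cmod (Cinv (itau_plus tau (IZR k ^ 2 + IZR l ^ 2 - Lambda k m)))
          <= C / (Rpower (INR m) (1 - s) * Rpower (Rabs (IZR l)) s)) /\
      Cmod (Cinv (itau_plus tau (IZR k ^ 2 - Lambda k m)))
        <= C / sqrt (tau ^ 2 + INR m ^ 4).
Proof.
  exists 1, 4. split; [lra|]. split; [lra|].
  intros k l m tau Hm.
  unfold Lambda. rewrite plus_INR. simpl (INR 1).
  set (y := INR m).
  assert (Hy : 1 <= y) by (apply (le_INR 1 m) in Hm; exact Hm).
  set (x := IZR l).
  set (t := Rabs x).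
  assert (Ht2 : x ^ 2 = t ^ 2) by (unfold t; rewrite <- Rsqr_pow2, <- Rsqr_pow2, <- Rsqr_abs; reflexivity).
  assert (Ht0 : 0 <= t) by apply Rabs_pos.
  assert (Hcase : t <= y \/ y + 1 <= t).
  { unfold t, x, y. rewrite <- abs_IZR, INR_IZR_INZ.
    destruct (Z_le_gt_dec (Z.abs l) (Z.of_nat m)) as [H|H].
    - left. apply IZR_le. exact H.
    - right. rewrite <- plus_IZR. apply IZR_le. lia. }
  set (a := x ^ 2 - (y ^ 2 + (y + 1) ^ 2) / 2).
  assert (Ha : (y + 1/2 <= a /\ t <= 4 * a) \/ (a <= - y - 1/2 /\ t <= y)).
  { unfold a. rewrite Ht2. destruct Hcase as [H|H].
    - right. split; [nra|lra].
    - left. split; nra. }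
  assert (Hay : y <= Rabs a).
  { destruct Ha as [[H1 _]|[H1 _]]; [rewrite Rabs_right by lra|rewrite Rabs_left by lra]; lra. }
  assert (Ha0 : a <> 0) by (destruct Ha as [[H1 _]|[H1 _]]; lra).
  assert (Hsq : forall u, Rabs u <= sqrt (u ^ 2 + tau ^ 2)).
  { intro u. rewrite <- sqrt_Rsqr_abs. apply sqrt_le_1_alt.
    rewrite Rsqr_pow2. nra. }
  replace (IZR k ^ 2 + x ^ 2 - (IZR k ^ 2 + (y ^ 2 + (y + 1) ^ 2) / 2)) with a
    by (unfold a; ring).
  split.
  { assert (y * y <= Rabs a * Rabs a) by nra.
    rewrite <- Rabs_mult in H. rewrite Rabs_right in H by nra.
    apply Rle_ge. simpl. nra. }
  split.
  { apply key_bound; try lra; auto.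
    - apply sqrt_lt_R0. nra.
    - assert (sqrt (y ^ 2 + tau ^ 2) <= sqrt (a ^ 2 + tau ^ 2)).
      { apply sqrt_le_1_alt. assert (y * y <= Rabs a * Rabs a) by nra.
        rewrite <- Rabs_mult, Rabs_right in H by nra. simpl. nra. }
      pose proof (sqrt_pos (y ^ 2 + tau ^ 2)). lra. }
  split.
  { intro Hl.
    assert (Htp : 0 < t).
    { unfold t, x. apply Rabs_pos_lt. apply not_0_IZR. exact Hl. }
    apply key_bound; try lra; auto.
    - pose proof (rpow_pos y (1 - s)). pose proof (rpow_pos t s).
      apply Rmult_lt_0_compat; auto.
    - pose proof (Hsq a).
      assert (t <= 4 * Rabs a).
      { destruct Ha as [[H1 H2]|[H1 H2]];
          [rewrite Rabs_right by lra|rewrite Rabs_left by lra]; lra. }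
      apply Rle_trans with (4 * Rabs a); [|lra].
      apply rpow_max; lra. }
  { replace (IZR k ^ 2 - (IZR k ^ 2 + (y ^ 2 + (y + 1) ^ 2) / 2))
        with (- ((y ^ 2 + (y + 1) ^ 2) / 2)) by ring.
    apply key_bound.
    - intro E; nra.
    - apply sqrt_lt_R0. assert (0 < y ^ 4) by (apply pow_lt; lra). pose proof (pow2_ge_0 tau). lra.
    - lra.
    - assert (sqrt (tau ^ 2 + y ^ 4) <= sqrt ((- ((y ^ 2 + (y + 1) ^ 2) / 2)) ^ 2 + tau ^ 2)).
      { apply sqrt_le_1_alt. nra. }
      pose proof (sqrt_pos (tau ^ 2 + y ^ 4)). lra. }
Qed.
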